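(* Let $R$ be an associative unital division ring over a field of characteristic $0$ with a derivation $'$ (write $\varphi^{(k)}$ for the $k$-th derivative). Let $\varphi\in R$ and for $n\geq1$ put $$\Theta_n=\bigl(\varphi^{(i+j-2)}\bigr)_{1\leq i,j\leq n},\qquad \theta_n=|\Theta_n|_{nn},$$ with the convention $\theta_0^{-1}:=0$, assuming all quasideterminants involved are defined and all $\theta_n$ invertible. Then for all $n\geq1$, $$\bigl(\theta_n'\theta_n^{-1}\bigr)'=\theta_{n+1}\theta_n^{-1}-\theta_n\theta_{n-1}^{-1}.$$
   Context: For an $n\times n$ matrix $X$ over $R$, $|X|_{ij}=x_{ij}-r_i^j(X^{ij})^{-1}c_j^i$, where $X^{ij}$ is $X$ with row $i$ and column $j$ removed, $r_i^j$ is row $i$ without its $j$-th entry and $c_j^i$ is column $j$ without its $i$-th entry; for $n=1$, $|X|_{11}=x_{11}$. *)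

(* Defs.v *)
From HB Require Import structures.
From mathcomp Require Import all_boot all_order all_algebra.
Set Implicit Arguments. Unset Strict Implicit. Unset Printing Implicit Defensive.
Import GRing.Theory.
Local Open Scope ring_scope.

Definition minor_mx (R : Type) (n : nat) (X : 'M[R]_n.+1) (i j : 'I_n.+1) : 'M[R]_n :=
  \matrix_(a < n, b < n) X (lift i a) (lift j b).

Definition qrow (R : Type) (n : nat) (X : 'M[R]_n.+1) (i j : 'I_n.+1) : 'rV[R]_n :=
  \row_(b < n) X i (lift j b).

Definition qcol (R : Type) (n : nat) (X : 'M[R]_n.+1) (i j : 'I_n.+1) : 'cV[R]_n :=
  \col_(a < n) X (lift i a) j.

(* For n+1 = 1 the minor is the
   0x0 matrix (trivially invertible) and this gives q = x_11. *)
Definition is_quasidet (R : pzRingType) (n : nat) (X : 'M[R]_n.+1)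
    (i j : 'I_n.+1) (q : R) : Prop :=
  exists Y : 'M[R]_n,
    minor_mx X i j *m Y = 1%:M /\ Y *m minor_mx X i j = 1%:M /\
    q = X i j - (qrow X i j *m Y *m qcol X i j) 0 0.

(* Theta_n = (phi^{(i+j-2)})_{1<=i,j<=n}; with 0-based indices phi^{(i+j)}. *)
Definition Theta (R : Type) (d : R -> R) (phi : R) (n : nat) : 'M[R]_n :=
  \matrix_(i < n, j < n) iter (i + j) d phi.

Definition theta_inv (R : unitRingType) (theta : nat -> R) (n : nat) : R :=
  if n is 0 then 0 else (theta n)^-1.

(* Main.v *)
Require Import Defs.
From HB Require Import structures.
From mathcomp Require Import all_boot all_order all_algebra.
Import GRing.Theory.
Local Open Scope ring_scope.
Set Implicit Arguments. Unset Strict Implicit.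

Section Abs.
Variable R : unitRingType.
Variable d : R -> R.
Hypothesis d_add : forall x y : R, d (x + y) = d x + d y.
Hypothesis d_mul : forall x y : R, d (x * y) = d x * y + x * d y.
Variable h : nat -> R.
Hypothesis hd : forall k, d (h k) = h k.+1.

Lemma d0 : d 0 = 0.
Proof.
have := d_add 0 0; rewrite addr0 => /eqP.
by rewrite -subr_eq0 opprD addrA subrr add0r oppr_eq0 => /eqP.
Qed.

Lemma d1 : d 1 = 0.
Proof.
have := d_mul 1 1; rewrite !mulr1 !mul1r => /eqP.
by rewrite -subr_eq0 opprD addrA subrr add0r oppr_eq0 => /eqP.
Qed.

Lemma dN x : d (- x) = - d x.
Proof.
apply/eqP; rewrite -subr_eq0 opprK -d_add addNr d0 //.
Qed.

Lemma dB x y : d (x - y) = d x - d y.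
Proof. by rewrite d_add dN. Qed.

Lemma d_sum k (F : 'I_k -> R) : d (\sum_(i < k) F i) = \sum_(i < k) d (F i).
Proof. exact: (big_morph d d_add d0). Qed.

Definition Lf m (P : nat -> R) k := \sum_(j < m.+1) P j * h (j + k).
Definition Rf m (Q : nat -> R) j := \sum_(k < m.+1) h (j + k) * Q k.
Definition isP m P th := [/\ P m = 1, forall k, (k < m)%N -> Lf m P k = 0 & Lf m P m = th].
Definition isQ m Q th := [/\ Q m = 1, forall j, (j < m)%N -> Rf m Q j = 0 & Rf m Q m = th].
Definition Uniq m := forall c : nat -> R,
  (forall k, (k < m)%N -> \sum_(j < m) c j * h (j + k) = 0) ->
  forall j, (j < m)%N -> c j = 0.

Lemma dLf m P k : d (Lf m P k) = \sum_(j < m.+1) d (P j) * h (j + k) + Lf m P k.+1.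
Proof.
rewrite /Lf d_sum -big_split /=; apply: eq_bigr => j _.
by rewrite d_mul hd addnS.
Qed.

Lemma swapPQ a b s P Q :
  \sum_(k < a) (\sum_(j < b) P j * h (j + (k + s))) * Q k
  = \sum_(j < b) P j * \sum_(k < a) h ((j + s) + k) * Q k.
Proof.
under eq_bigr do rewrite mulr_suml.
rewrite exchange_big; apply: eq_bigr => j _; rewrite mulr_sumr.
by apply: eq_bigr => k _; rewrite mulrA addnA addnAC.
Qed.

Lemma swap0 a b P Q :
  \sum_(k < a) (\sum_(j < b) P j * h (j + k)) * Q k
  = \sum_(j < b) P j * \sum_(k < a) h (j + k) * Q k.
Proof.
under eq_bigr do rewrite mulr_suml.
rewrite exchange_big; apply: eq_bigr => j _; rewrite mulr_sumr.
by apply: eq_bigr => k _; rewrite mulrA.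
Qed.

Lemma dP m P th1 P' th0 : isP m.+1 P th1 -> isP m P' th0 ->
  th0 \is a GRing.unit -> Uniq m.+1 ->
  forall j, (j < m.+1)%N -> d (P j) = - (th1 * th0^-1) * P' j.
Proof.
move=> [P1 PL Pth] [P'1 P'L P'th] u U j lj.
apply/eqP; rewrite -subr_eq0; apply/eqP.
apply: (U (fun j => d (P j) - - (th1 * th0^-1) * P' j)) => // k lk.
under eq_bigr do rewrite mulrBl -mulrA.
rewrite sumrB -mulr_sumr.
have E := dLf m.+1 P k.
rewrite PL // d0 big_ord_recr /= P1 d1 mul0r addr0 in E.
have -> : \sum_(i < m.+1) d (P i) * h (i + k) = - Lf m.+1 P k.+1.
  by apply/eqP; rewrite -subr_eq0 opprK -E.
have -> : \sum_(i < m.+1) P' i * h (i + k) = Lf m P' k by [].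
move: lk; rewrite ltnS leq_eqVlt => /orP [/eqP ->|lk].
  by rewrite Pth P'th mulNr opprK divrK // addNr.
by rewrite PL // P'L // mulr0 oppr0 addr0.
Qed.

Lemma dth m P Q th P2 th2 : isP m P th -> isQ m Q th -> isP m.+1 P2 th2 ->
  d th = ((if m is m'.+1 then P m' else 0) - P2 m) * th.
Proof.
move=> [P1 PL Pth] [Q1 QL Qth] [P21 P2L P2th].
rewrite /Rf in QL Qth.
have Eth : th = \sum_(k < m.+1) Lf m P k * Q k.
  rewrite big_ord_recr /= Pth Q1 mulr1 big1 ?add0r // => i _.
  by rewrite PL ?mul0r.
have ER : \sum_(k < m.+1) h (m.+1 + k) * Q k = - (P2 m * th).
  have Z : \sum_(k < m.+1) Lf m.+1 P2 k * Q k = 0.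
    by rewrite big1 // => i _; rewrite P2L ?mul0r.
  rewrite /Lf swap0 in Z.
  rewrite big_ord_recr /= P21 mul1r big_ord_recr /= Qth big1 ?add0r in Z.
    by apply/eqP; rewrite -subr_eq0 opprK addrC Z.
  by move=> i _; rewrite QL ?mulr0.
rewrite [in LHS]Eth d_sum.
under eq_bigr do rewrite d_mul dLf mulrDl.
rewrite !big_split /=.
have -> : \sum_(i < m.+1) Lf m P i * d (Q i) = 0.
  rewrite big_ord_recr /= Q1 d1 mulr0 addr0 big1 // => i _.
  by rewrite PL ?mul0r.
rewrite swap0 big_ord_recr /= P1 d1 mul0r addr0 big1 ?add0r; last first.
  by move=> i _; rewrite QL ?mulr0.
rewrite /Lf.
under eq_bigr => i _ do under eq_bigr => j _ do rewrite -(addn1 i).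
rewrite swapPQ big_ord_recr /= P1 mul1r addn1 ER.
destruct m as [|m].
  by rewrite big_ord0 add0r sub0r mulNr.
rewrite big_ord_recr /= big1 ?add0r; last first.
  by move=> i _; rewrite addn1 QL ?mulr0 // ltnS.
by rewrite addn1 Qth mulrBl.
Qed.
End Abs.

Lemma Theta_minor (R : Type) (d : R -> R) phi m :
  minor_mx (Theta d phi m.+1) ord_max ord_max = Theta d phi m.
Proof. by apply/matrixP => i j; rewrite !mxE !lift_max. Qed.

Section Ex.
Variable R : unitRingType.
Variable d : R -> R.
Variable phi : R.
Local Notation h := (fun k => iter k d phi).

Lemma exP m th : is_quasidet (Theta d phi m.+1) ord_max ord_max th ->
  exists P, isP h m P th.
Proof.
move=> [Y [HY [YH ->]]].
rewrite Theta_minor in HY YH.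
set u := qrow _ _ _; set v := qcol _ _ _.
have Hu : forall k : 'I_m,
    \sum_(i < m) (u *m Y) 0 i * iter (i + k) d phi = iter (m + k) d phi.
  move=> k; have E : ((u *m Y) *m Theta d phi m) 0 k = u 0 k.
    by rewrite -mulmxA YH mulmx1.
  have -> : iter (m + k) d phi = u 0 k by rewrite !mxE lift_max.
  rewrite -E mxE; apply: eq_bigr => i _; by rewrite [Theta _ _ _ _ _]mxE.
exists (fun j => if (insub j : option 'I_m) is Some i then - (u *m Y) 0 i else 1).
split.
- by rewrite insubF // ltnn.
- move=> k km; rewrite /Lf big_ord_recr /= insubF ?ltnn // mul1r.
  under eq_bigr => i _ do rewrite valK mulNr.
  by rewrite sumrN (Hu (Ordinal km)) addNr.
- rewrite /Lf big_ord_recr /= insubF ?ltnn // mul1r.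
  under eq_bigr => i _ do rewrite valK mulNr.
  rewrite sumrN addrC [Theta _ _ _ _ _]mxE; congr (_ - _).
  rewrite [RHS]mxE; apply: eq_bigr => i _; congr (_ * _).
  by rewrite !mxE lift_max.
Qed.

Lemma exQ m th : is_quasidet (Theta d phi m.+1) ord_max ord_max th ->
  exists Q, isQ h m Q th.
Proof.
move=> [Y [HY [YH ->]]].
rewrite Theta_minor in HY YH.
set u := qrow _ _ _; set v := qcol _ _ _.
have Hv : forall k : 'I_m,
    \sum_(i < m) iter (k + i) d phi * (Y *m v) i 0 = iter (k + m) d phi.
  move=> k; have E : (Theta d phi m *m (Y *m v)) k 0 = v k 0.
    by rewrite mulmxA HY mul1mx.
  have -> : iter (k + m) d phi = v k 0 by rewrite !mxE lift_max.
  rewrite -E mxE; apply: eq_bigr => i _; by rewrite [Theta _ _ _ _ _]mxE.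
exists (fun j => if (insub j : option 'I_m) is Some i then - (Y *m v) i 0 else 1).
split.
- by rewrite insubF // ltnn.
- move=> k km; rewrite /Rf big_ord_recr /= insubF ?ltnn // mulr1.
  under eq_bigr => i _ do rewrite valK mulrN.
  by rewrite sumrN (Hv (Ordinal km)) addNr.
- rewrite /Rf big_ord_recr /= insubF ?ltnn // mulr1.
  under eq_bigr => i _ do rewrite valK mulrN.
  rewrite sumrN addrC [Theta _ _ _ _ _]mxE -mulmxA; congr (_ - _).
  rewrite [RHS]mxE; apply: eq_bigr => i _; congr (_ * _).
  by rewrite !mxE lift_max.
Qed.

Lemma uniqT m th : is_quasidet (Theta d phi m.+1) ord_max ord_max th ->
  Uniq h m.
Proof.
move=> [Y [HY [YH _]]] c Hc j jm.
rewrite Theta_minor in HY YH.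
have E : (\row_(i < m) c i) *m Theta d phi m = 0.
  apply/matrixP => a b; rewrite !mxE -[RHS](Hc b (ltn_ord b)).
  by apply: eq_bigr => i _; rewrite !mxE.
have : (\row_(i < m) c i) = 0 by rewrite -[LHS]mulmx1 -HY mulmxA E mul0mx.
by move/matrixP/(_ 0 (Ordinal jm)); rewrite !mxE.
Qed.
End Ex.

Theorem proposition4p11
  (F : fieldType) (hF : [pchar F] =i pred0)
  (R : unitAlgType F)
  (hdiv : forall x : R, x != 0 -> x \is a GRing.unit)
  (d : R -> R)
  (d_add : forall x y : R, d (x + y) = d x + d y)
  (d_scale : forall (c : F) (x : R), d (c *: x) = c *: d x)
  (d_mul : forall x y : R, d (x * y) = d x * y + x * d y)
  (phi : R) (theta : nat -> R)
  (htheta : forall n : nat, is_quasidet (Theta d phi n.+1) ord_max ord_max (theta n.+1))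
  (hunit : forall n : nat, (1 <= n)%N -> theta n \is a GRing.unit)
  (n : nat) (hn : (1 <= n)%N) :
  d (d (theta n) * (theta n)^-1)
    = theta n.+1 * (theta n)^-1 - theta n * theta_inv theta n.-1.
Proof.
have hd : forall k, d ((fun k => iter k d phi) k) = (fun k => iter k d phi) k.+1.
  by [].
case: n hn => [//|m] _ /=.
have [Pm HPm] := exP (htheta m).
have [Qm HQm] := exQ (htheta m).
have [P1 HP1] := exP (htheta m.+1).
rewrite (dth d_add d_mul hd HPm HQm HP1) mulrK ?hunit // dB //.
rewrite (dP d_add d_mul hd HP1 HPm (hunit m.+1 isT) (uniqT (htheta m.+1)) (ltnSn m)).
have [-> _ _] := HPm; rewrite mulr1 opprK.
destruct m as [|m] => /=.
  by rewrite (d0 d_add) add0r mulr0 subr0.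
have [P0 HP0] := exP (htheta m).
rewrite (dP d_add d_mul hd HPm HP0 (hunit m.+1 isT) (uniqT (htheta m.+1)) (ltnSn m)).
have [-> _ _] := HP0.
by rewrite mulr1 addrC.
Qed.
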